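(* Let $C>0$ and $\delta>0$, let $f \in C((0,\infty);(0,\infty))$ be asymptotically increasing with $\lim_{x\to\infty} f(x)/x = \infty$, and let $\psi \in C([-\delta,0];(0,\infty))$. Suppose $f$ preserves superexponential growth, and let $z \in C([-\delta,\infty);(0,\infty))$ be a solution of \[ z'(t) = C\int_{t-\delta}^t f(z(s))\,ds, \quad t\ge 0; \qquad z(t)=\psi(t), \quad t\in[-\delta,0]. \] Then \[ \lim_{t\to\infty} \frac{F_U(z(t))}{t} = \sqrt{2C}, \] where $F_U(x) = \int_1^x \frac{du}{\sqrt{\int_0^u f(s)\,ds}}$ for $x>0$.
   Context: ''$f$ is asymptotically increasing'' means that there is a continuous increasing function $\phi:(0,\infty)\to(0,\infty)$ with $f(x)/\phi(x)\to 1$ as $x\to\infty$. A function $g \in C((0,\infty);(0,\infty))$ exhibits superexponential growth if $g(x)\to\infty$ as $x\to\infty$ and $\lim_{x\to\infty} g(x-\epsilon)/g(x) = 0$ for each $\epsilon>0$. A function $\phi \in C((0,\infty);(0,\infty))$ preserves superexponential growth if for every $g$ exhibiting superexponential growth and every $\epsilon>0$, $\lim_{x\to\infty}\phi(g(x-\epsilon))/\phi(g(x)) = 0$. *)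

(* Defs.v *)
From Stdlib Require Import Reals.
From Coquelicot Require Import Coquelicot.
Open Scope R_scope.

Definition pos_cont (g : R -> R) : Prop :=
  forall x, 0 < x -> continuous g x /\ 0 < g x.

Definition asymptotically_increasing (f : R -> R) : Prop :=
  exists phi : R -> R,
    pos_cont phi /\
    (forall x y, 0 < x -> x < y -> phi x < phi y) /\
    is_lim (fun x => f x / phi x) p_infty 1.

Definition superexponential (g : R -> R) : Prop :=
  pos_cont g /\ is_lim g p_infty p_infty /\
  forall eps, 0 < eps -> is_lim (fun x => g (x - eps) / g x) p_infty 0.

Definition preserves_superexp (phi : R -> R) : Prop :=
  pos_cont phi /\
  forall g, superexponential g -> forall eps, 0 < eps ->
    is_lim (fun x => phi (g (x - eps)) / phi (g x)) p_infty 0.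

Definition F_U (f : R -> R) (x : R) : R :=
  RInt (fun u => / sqrt (RInt_gen f (at_right 0) (at_point u))) 1 x.

(* Main.v *)
Require Import Defs.
From Stdlib Require Import Reals Lra.
From Coquelicot Require Import Coquelicot.
Open Scope R_scope.

Lemma lim_pinf_iff (f : R -> R) :
  is_lim f p_infty p_infty <-> forall M, exists N, forall x, N < x -> M < f x.
Proof.
  rewrite <- is_lim_spec. split; intros H M; apply H.
Qed.

Lemma lim_fin_iff (f : R -> R) (l : R) :
  is_lim f p_infty l <-> forall eps, 0 < eps -> exists N, forall x, N < x -> Rabs (f x - l) < eps.
Proof.
  rewrite <- is_lim_spec. split.
  - intros H eps He. exact (H (mkposreal eps He)).
  - intros H eps. apply (H eps (cond_pos eps)).
Qed.

Lemma mvt (h dh : R -> R) (a x y : R) :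
  (forall u, a < u -> is_derive h u (dh u)) -> a < x -> x <= y ->
  exists c, x <= c <= y /\ h y - h x = dh c * (y - x).
Proof.
  intros Hd Hx Hxy.
  destruct (MVT_gen h x y dh) as [c [Hc Heq]].
  - intros u Hu. apply Hd. rewrite Rmin_left in Hu by lra. lra.
  - intros u Hu. apply continuity_pt_filterlim. apply (ex_derive_continuous (V:=R_NormedModule)).
    eexists. apply Hd. rewrite Rmin_left in Hu by lra. lra.
  - exists c. rewrite Rmin_left in Hc by lra. rewrite Rmax_right in Hc by lra. split; auto.
Qed.

Lemma is_derive_Rminus (f g : R -> R) x df dg :
  is_derive f x df -> is_derive g x dg -> is_derive (fun t => f t - g t) x (df - dg).
Proof. intros H1 H2. exact (is_derive_minus f g x df dg H1 H2). Qed.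

Lemma lhop (h H dh dH : R -> R) (a : R) :
  (forall x, a < x -> is_derive h x (dh x)) ->
  (forall x, a < x -> is_derive H x (dH x)) ->
  is_lim H p_infty p_infty ->
  (forall eta, 0 < eta -> exists T, forall x, T < x ->
      (1 - eta) * dH x <= dh x <= (1 + eta) * dH x) ->
  is_lim (fun x => h x / H x) p_infty 1.
Proof.
  intros Hh HH Hinf Hr. apply lim_fin_iff. intros eps0 Heps0.
  cut (exists N, forall x, N < x -> Rabs (h x / H x - 1) < Rmin eps0 1).
  { intros [N HN]; exists N; intros x Hx; eapply Rlt_le_trans; [apply HN; auto| apply Rmin_l]. }
  assert (Heps : 0 < Rmin eps0 1) by (apply Rmin_pos; lra).
  assert (Heps1 : Rmin eps0 1 <= 1) by apply Rmin_r.
  set (eps := Rmin eps0 1) in *. clearbody eps.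
  destruct (Hr (eps/2)) as [T HT]; [lra|].
  set (T1 := Rmax T a + 1).
  assert (Hup : forall x, T1 <= x -> h x - h T1 <= (1 + eps/2) * (H x - H T1)).
  { intros x Hx.
    destruct (mvt (fun u => h u - (1 + eps/2) * H u) (fun u => dh u - (1+eps/2) * dH u) a T1 x)
      as [c [Hc Hq]]; auto.
    - intros u Hu. apply is_derive_Rminus; auto. apply is_derive_scal; auto.
    - unfold T1; pose proof (Rmax_r T a); lra.
    - assert (dh c - (1 + eps/2) * dH c <= 0).
      { destruct (HT c) as [_ ?]; [unfold T1 in Hc; pose proof (Rmax_l T a); lra| lra]. }
      assert ((dh c - (1 + eps / 2) * dH c) * (x - T1) <= 0).
      { apply Rmult_le_0_r; lra. }
      lra. }
  assert (Hlo : forall x, T1 <= x -> (1 - eps/2) * (H x - H T1) <= h x - h T1).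
  { intros x Hx.
    destruct (mvt (fun u => h u - (1 - eps/2) * H u) (fun u => dh u - (1-eps/2) * dH u) a T1 x)
      as [c [Hc Hq]]; auto.
    - intros u Hu. apply is_derive_Rminus; auto. apply is_derive_scal; auto.
    - unfold T1; pose proof (Rmax_r T a); lra.
    - assert (0 <= dh c - (1 - eps/2) * dH c).
      { destruct (HT c) as [? _]; [unfold T1 in Hc; pose proof (Rmax_l T a); lra| lra]. }
      assert (0 <= (dh c - (1 - eps / 2) * dH c) * (x - T1)).
      { apply Rmult_le_pos; lra. }
      lra. }
  set (K := Rabs (h T1) + 2 * Rabs (H T1) + 1).
  pose proof (proj1 (lim_pinf_iff H) Hinf) as Hinf0; clear Hinf; rename Hinf0 into Hinf.
  destruct (Hinf (2 * K / (eps/2) + 1)) as [N HN].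
  exists (Rmax N T1). intros x Hx.
  assert (HxN : N < x) by (pose proof (Rmax_l N T1); lra).
  assert (HxT : T1 <= x) by (pose proof (Rmax_r N T1); lra).
  specialize (HN x HxN). specialize (Hup x HxT). specialize (Hlo x HxT).
  assert (HK : 0 < K) by (unfold K; pose proof (Rabs_pos (h T1)); pose proof (Rabs_pos (H T1)); lra).
  assert (HKd : 0 <= 2 * K / (eps/2)) by (apply Rlt_le, Rdiv_lt_0_compat; lra).
  assert (HHx : 0 < H x) by lra.
  assert (HKx : K < (eps/2) * H x).
  { assert (2 * K / (eps / 2) * (eps/2) = 2 * K) by (field; lra).
    nra. }
  pose proof (Rle_abs (h T1)). pose proof (Rle_abs (- h T1)). rewrite Rabs_Ropp in *.
  pose proof (Rle_abs (H T1)). pose proof (Rle_abs (- H T1)). rewrite Rabs_Ropp in *.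
  assert (0 <= eps/2 * Rabs (H T1) <= Rabs (H T1)) by nra.
  assert (- (eps/2 * Rabs (H T1)) <= eps/2 * H T1 <= eps/2 * Rabs (H T1)) by nra.
  assert (Hkey : Rabs (h x - H x) < eps * H x).
  { apply Rabs_def1; unfold K in HKx; lra. }
  replace (h x / H x - 1) with ((h x - H x) / H x) by (field; lra).
  rewrite Rabs_div; [|lra]. rewrite (Rabs_right (H x)) by lra.
  apply Rlt_div_l; lra.
Qed.

Lemma cesaro (P k : R -> R) (a L : R) :
  (forall x, a < x -> is_derive P x (k x)) ->
  is_lim k p_infty L ->
  is_lim (fun x => P x / x) p_infty L.
Proof.
  intros HP Hk. apply lim_fin_iff. intros eps Heps.
  pose proof (proj1 (lim_fin_iff k L) Hk) as Hk0; clear Hk; rename Hk0 into Hk. destruct (Hk (eps/2)) as [T HT]; [lra|].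
  set (T1 := Rmax (Rmax T a) 0 + 1).
  assert (HT1 : T < T1 /\ a < T1 /\ 0 < T1) by (unfold T1; pose proof (Rmax_l (Rmax T a) 0); pose proof (Rmax_r (Rmax T a) 0); pose proof (Rmax_l T a); pose proof (Rmax_r T a); lra).
  clearbody T1.
  assert (Hb : forall x, T1 <= x -> Rabs (P x - P T1 - L * (x - T1)) <= eps/2 * (x - T1)).
  { intros x Hx. destruct (mvt P k a T1 x) as [c [Hc Hq]]; auto.
    lra.
    rewrite Hq. replace (k c * (x - T1) - L * (x - T1)) with ((k c - L) * (x - T1)) by ring.
    rewrite Rabs_mult. rewrite (Rabs_right (x - T1)) by lra.
    apply Rmult_le_compat_r; [lra|]. apply Rlt_le, HT. lra. }
  set (K := Rabs (P T1 - L * T1)).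
  exists (Rmax (T1 + 1) (2 * K / (eps/2) + 1)). intros x Hx.
  assert (Hx1 : T1 + 1 < x) by (pose proof (Rmax_l (T1+1) (2 * K / (eps/2) + 1)); lra).
  assert (Hx2 : 2 * K / (eps/2) + 1 < x) by (pose proof (Rmax_r (T1+1) (2 * K / (eps/2) + 1)); lra).
  assert (HK : 0 <= K) by apply Rabs_pos.
  assert (HKd : 0 <= 2 * K / (eps/2)) by (apply Rmult_le_pos; [lra| apply Rlt_le, Rinv_0_lt_compat; lra]).
  assert (Hxp : 0 < x) by lra.
  assert (HKx : K < (eps/2) * x).
  { assert (2 * K / (eps / 2) * (eps/2) = 2 * K) by (field; lra). nra. }
  specialize (Hb x ltac:(lra)).
  replace (P x / x - L) with (((P x - P T1 - L * (x - T1)) + (P T1 - L * T1)) / x) by (field; lra).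
  rewrite Rabs_div by lra. rewrite (Rabs_right x) by lra.
  apply Rlt_div_l; [lra|].
  eapply Rle_lt_trans; [apply Rabs_triang|]. fold K. assert (eps/2 * (x - T1) <= eps/2 * x) by nra. lra.
Qed.

Lemma cont_pt (f : R -> R) x : continuous f x -> continuity_pt f x.
Proof. intros H. apply continuity_pt_filterlim. exact H. Qed.

Lemma f_lin (f : R -> R) :
  is_lim (fun x => f x / x) p_infty p_infty ->
  forall K, exists X, 0 < X /\ forall x, X <= x -> K * x <= f x.
Proof.
  intros H K. destruct (proj1 (lim_pinf_iff _) H K) as [N HN].
  exists (Rmax N 0 + 1). split.
  - pose proof (Rmax_r N 0); lra.
  - intros x Hx. pose proof (Rmax_r N 0); pose proof (Rmax_l N 0).
    specialize (HN x ltac:(lra)).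
    apply Rlt_le. apply (Rmult_lt_reg_r (/ x)). apply Rinv_0_lt_compat; lra.
    replace (K * x * / x) with K by (field; lra). exact HN.
Qed.

Lemma f_low (f : R -> R) :
  pos_cont f -> is_lim (fun x => f x / x) p_infty p_infty ->
  forall a, 0 < a -> exists m, 0 < m /\ forall x, a <= x -> m <= f x.
Proof.
  intros Hf Hl a Ha. destruct (f_lin f Hl 1) as [X [HX HXf]].
  set (X' := Rmax X a).
  destruct (continuity_ab_min f a X') as [mx [Hmx Hmxr]].
  - unfold X'; apply Rmax_r.
  - intros c Hc. apply cont_pt. apply Hf. lra.
  - assert (0 < f mx) by (apply Hf; lra).
    exists (Rmin (f mx) a). split. apply Rmin_pos; lra.
    intros x Hx. destruct (Rle_dec x X').
    + eapply Rle_trans; [apply Rmin_l|]. apply Hmx; lra.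
    + eapply Rle_trans; [apply Rmin_r|]. assert (X <= x) by (unfold X' in *; pose proof (Rmax_l X a); lra).
      specialize (HXf x H0). unfold X' in *; pose proof (Rmax_r X a); lra.
Qed.

Record H6 (C delta : R) (f z : R -> R) : Prop := {
  hC : 0 < C; hd : 0 < delta; hf : pos_cont f;
  hlin : is_lim (fun x => f x / x) p_infty p_infty;
  hzpos : forall t, 0 < t -> 0 < z t;
  hzd : forall t, 0 < t -> is_derive z t (C * RInt (fun s => f (z s)) (t - delta) t) }.


Lemma zc C d f z : H6 C d f z -> forall t, 0 < t -> continuous z t.
Proof. intros HS t Ht. apply (ex_derive_continuous (V:=R_NormedModule)). eexists. apply (hzd _ _ _ _ HS t Ht). Qed.

Lemma gc C d f z : H6 C d f z -> forall t, 0 < t -> continuous (fun s => f (z s)) t.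
Proof. intros HS t Ht. apply continuous_comp. apply (zc _ _ _ _ HS t Ht). apply (hf _ _ _ _ HS). apply (hzpos _ _ _ _ HS t Ht). Qed.

Lemma gpos C d f z : H6 C d f z -> forall t, 0 < t -> 0 < f (z t).
Proof. intros HS t Ht. apply (hf _ _ _ _ HS). apply (hzpos _ _ _ _ HS t Ht). Qed.

Lemma g_exRInt C d f z : H6 C d f z -> forall a b, 0 < a -> 0 < b -> ex_RInt (fun s => f (z s)) a b.
Proof. intros HS a b Ha Hb. apply (ex_RInt_continuous (V:=R_CompleteNormedModule)). intros u Hu. apply (gc _ _ _ _ HS).
  pose proof (Rmin_glb_lt a b 0). destruct Hu. pose proof (Rmin_l a b); pose proof (Rmin_r a b).
  destruct (Rle_dec a b); [rewrite Rmin_left in H0 by lra| rewrite Rmin_right in H0 by lra]; lra.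
Qed.

Lemma w_pos C d f z : H6 C d f z -> forall t, d < t -> 0 < RInt (fun s => f (z s)) (t - d) t.
Proof. intros HS t Ht. pose proof (hd _ _ _ _ HS). apply RInt_gt_0. lra.
  intros x Hx. apply (gpos _ _ _ _ HS). lra.
  intros x Hx. apply (gc _ _ _ _ HS). lra. Qed.

Lemma z_mono C d f z : H6 C d f z -> forall x y, d < x -> x <= y -> z x <= z y.
Proof. intros HS x y Hx Hxy. pose proof (hd _ _ _ _ HS). pose proof (hC _ _ _ _ HS).
  destruct (mvt z (fun t => C * RInt (fun s => f (z s)) (t - d) t) d x y) as [c [Hc Hq]]; auto.
  intros u Hu. apply (hzd _ _ _ _ HS). lra.
  assert (0 < RInt (fun s => f (z s)) (c - d) c) by (apply (w_pos _ _ _ _ HS); lra).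
  assert (0 <= C * RInt (fun s => f (z s)) (c - d) c * (y - x)).
  { apply Rmult_le_pos; [|lra]. apply Rmult_le_pos; lra. }
  lra.
Qed.

Lemma RInt_lower (k : R -> R) a b m : a <= b -> ex_RInt k a b -> (forall x, a < x < b -> m <= k x) ->
  m * (b - a) <= RInt k a b.
Proof. intros Hab He Hk.
  assert (RInt (fun _ => m) a b = (b - a) * m) by (rewrite RInt_const; reflexivity).
  rewrite Rmult_comm, <- H. apply RInt_le; auto. apply ex_RInt_const.
Qed.

Lemma z_inf C d f z : H6 C d f z -> is_lim z p_infty p_infty.
Proof. intros HS. pose proof (hd _ _ _ _ HS) as Hd. pose proof (hC _ _ _ _ HS) as HC.
  destruct (f_low f (hf _ _ _ _ HS) (hlin _ _ _ _ HS) (z (2*d))) as [m [Hm Hmf]].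
  apply (hzpos _ _ _ _ HS); lra.
  assert (Hw : forall c, 3 * d <= c -> m * d <= RInt (fun s => f (z s)) (c - d) c).
  { intros c Hc. replace (m * d) with (m * (c - (c - d))) by ring. apply RInt_lower. lra.
    apply (g_exRInt _ _ _ _ HS); lra.
    intros x Hx. apply Hmf. apply (z_mono _ _ _ _ HS); lra. }
  assert (Hlow : forall t, 3 * d <= t -> z (3*d) + C * (m * d) * (t - 3 * d) <= z t).
  { intros t Ht. destruct (mvt z (fun t => C * RInt (fun s => f (z s)) (t - d) t) d (3*d) t) as [c [Hc Hq]]; auto.
    intros u Hu. apply (hzd _ _ _ _ HS). lra. lra.
    specialize (Hw c ltac:(lra)).
    assert (C * (m * d) * (t - 3 * d) <= C * RInt (fun s => f (z s)) (c - d) c * (t - 3 * d)).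
    { apply Rmult_le_compat_r; [lra|]. apply Rmult_le_compat_l; lra. }
    lra. }
  apply lim_pinf_iff. intros M.
  assert (Hk : 0 < C * (m * d)) by (apply Rmult_lt_0_compat; [lra| apply Rmult_lt_0_compat; lra]).
  exists (3 * d + Rabs (M - z (3 * d)) / (C * (m * d))). intros x Hx.
  assert (0 <= Rabs (M - z (3 * d)) / (C * (m * d))) by (apply Rmult_le_pos; [apply Rabs_pos| apply Rlt_le, Rinv_0_lt_compat; lra]).
  specialize (Hlow x ltac:(lra)).
  assert (Rabs (M - z (3 * d)) < C * (m * d) * (x - 3 * d)).
  { apply (Rmult_lt_reg_r (/ (C * (m * d)))). apply Rinv_0_lt_compat; lra.
    replace (C * (m * d) * (x - 3 * d) * / (C * (m * d))) with (x - 3 * d) by (field; lra).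
    unfold Rdiv in *. lra. }
  pose proof (Rle_abs (M - z (3 * d))). lra.
Qed.

Lemma z_super C d f z : H6 C d f z -> superexponential z.
Proof. intros HS. pose proof (hd _ _ _ _ HS) as Hd. pose proof (hC _ _ _ _ HS) as HC.
  split; [|split].
  - intros x Hx. split. apply (zc _ _ _ _ HS x Hx). apply (hzpos _ _ _ _ HS x Hx).
  - apply (z_inf _ _ _ _ HS).
  - intros ep Hep. apply lim_fin_iff. intros eps Heps.
    set (e := Rmin (ep/2) d).
    assert (He : 0 < e) by (apply Rmin_pos; lra).
    assert (He1 : e <= ep/2) by apply Rmin_l.
    assert (He2 : e <= d) by apply Rmin_r.
    clearbody e.
    set (K := 2 / (C * e * e * eps)).
    assert (HK : C * e * e * K = 2 / eps) by (unfold K; field; repeat split; lra).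
    assert (HKp : 0 < K) by (unfold K; apply Rdiv_lt_0_compat; [lra| repeat apply Rmult_lt_0_compat; lra]).
    clearbody K.
    destruct (f_lin f (hlin _ _ _ _ HS) K) as [X [HX0 HX]].
    destruct (proj1 (lim_pinf_iff z) (z_inf _ _ _ _ HS) X) as [T0 HT0].
    set (T := Rmax T0 (2*d) + 1).
    assert (HT : T0 < T /\ 2 * d < T) by (unfold T; pose proof (Rmax_l T0 (2*d)); pose proof (Rmax_r T0 (2*d)); lra).
    clearbody T.
    assert (Cl1 : forall s, T + e <= s -> C * e * K * z (s - e) <= C * RInt (fun u => f (z u)) (s - d) s).
    { intros s Hs.
      assert (E1 : ex_RInt (fun u => f (z u)) (s - d) (s - e)) by (apply (g_exRInt _ _ _ _ HS); lra).
      assert (E2 : ex_RInt (fun u => f (z u)) (s - e) s) by (apply (g_exRInt _ _ _ _ HS); lra).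
      assert (Hch : RInt (fun u => f (z u)) (s - d) (s - e) + RInt (fun u => f (z u)) (s - e) s = RInt (fun u => f (z u)) (s - d) s)
        by exact (RInt_Chasles _ _ _ _ E1 E2).
      assert (R1 : 0 <= RInt (fun u => f (z u)) (s - d) (s - e)).
      { apply RInt_ge_0; auto. lra. intros x Hx. apply Rlt_le, (gpos _ _ _ _ HS). lra. }
      assert (R2 : K * z (s - e) * (s - (s - e)) <= RInt (fun u => f (z u)) (s - e) s).
      { apply RInt_lower; auto. lra. intros u Hu.
        assert (z (s - e) <= z u) by (apply (z_mono _ _ _ _ HS); lra).
        assert (X < z (s - e)) by (apply HT0; lra).
        specialize (HX (z u) ltac:(lra)).
        assert (K * z (s - e) <= K * z u) by (apply Rmult_le_compat_l; lra). lra. }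
      replace (C * e * K * z (s - e)) with (C * (K * z (s - e) * (s - (s - e)))) by ring.
      apply Rmult_le_compat_l; lra. }
    assert (Cl2 : forall t, T + 2 * e <= t -> C * e * e * K * z (t - 2 * e) <= z t).
    { intros t Ht.
      destruct (mvt z (fun t => C * RInt (fun s => f (z s)) (t - d) t) d (t - e) t) as [c [Hc Hq]].
      intros u Hu. apply (hzd _ _ _ _ HS). lra. lra. lra.
      specialize (Cl1 c ltac:(lra)).
      assert (z (t - 2 * e) <= z (c - e)) by (apply (z_mono _ _ _ _ HS); lra).
      assert (0 < z (t - e)) by (apply (hzpos _ _ _ _ HS); lra).
      assert (C * e * K * z (t - 2 * e) <= C * e * K * z (c - e)).
      { apply Rmult_le_compat_l; [|lra]. repeat apply Rmult_le_pos; lra. }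
      replace (t - (t - e)) with e in Hq by ring.
      assert (C * e * K * z (c - e) * e <= C * RInt (fun s => f (z s)) (c - d) c * e)
        by (apply Rmult_le_compat_r; lra).
      replace (C * e * e * K * z (t - 2 * e)) with (C * e * K * z (t - 2 * e) * e) by ring.
      assert (C * e * K * z (t - 2 * e) * e <= C * e * K * z (c - e) * e) by (apply Rmult_le_compat_r; lra).
      lra. }
    exists (T + ep). intros x Hx.
    specialize (Cl2 x ltac:(lra)). rewrite HK in Cl2.
    assert (Hm : z (x - ep) <= z (x - 2 * e)) by (apply (z_mono _ _ _ _ HS); lra).
    assert (Hzx : 0 < z x) by (apply (hzpos _ _ _ _ HS); lra).
    assert (Hzxe : 0 < z (x - ep)) by (apply (hzpos _ _ _ _ HS); lra).
    rewrite Rminus_0_r. rewrite Rabs_right.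
    2: { apply Rle_ge, Rlt_le, Rdiv_lt_0_compat; lra. }
    apply Rlt_div_l; [lra|].
    assert (2 / eps * z (x - 2 * e) * (eps / 2) = z (x - 2 * e)) by (field; lra).
    assert (2 / eps * z (x - 2 * e) * (eps / 2) <= z x * (eps/2)) by (apply Rmult_le_compat_r; lra).
    nra.
Qed.

Lemma r_lim C d f z : H6 C d f z -> preserves_superexp f ->
  is_lim (fun x => f (z (x - d)) / f (z x)) p_infty 0.
Proof. intros HS [_ Hp]. apply Hp. apply (z_super _ _ _ _ HS). apply (hd _ _ _ _ HS). Qed.

Lemma loc_gt a t : a < t -> locally t (fun b => a < b).
Proof. intros H. assert (Hp : 0 < t - a) by lra. exists (mkposreal _ Hp). intros b Hb.
  change (Rabs (b - t) < t - a) in Hb. apply Rabs_def2 in Hb. lra. Qed.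

Lemma ex_RInt_pos (k : R -> R) : (forall x, 0 < x -> continuous k x) ->
  forall a b, 0 < a -> 0 < b -> ex_RInt k a b.
Proof. intros Hk a b Ha Hb. apply (ex_RInt_continuous (V:=R_CompleteNormedModule)). intros u Hu. apply Hk.
  destruct Hu. destruct (Rle_dec a b); [rewrite Rmin_left in H by lra| rewrite Rmin_right in H by lra]; lra.
Qed.

Lemma prim_deriv (k : R -> R) : (forall x, 0 < x -> continuous k x) ->
  forall t, 0 < t -> is_derive (fun t => RInt k 1 t) t (k t).
Proof. intros Hk t Ht. apply (is_derive_RInt k (fun b => RInt k 1 b) 1 t); [|auto].
  apply (filter_imp (fun b => 0 < b)); [|apply loc_gt; auto].
  intros b Hb. apply (RInt_correct (V:=R_CompleteNormedModule)). apply ex_RInt_pos; auto; lra.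
Qed.

Lemma is_derive_sq (u : R -> R) x du : is_derive u x du -> is_derive (fun t => u t * u t / 2) x (u x * du).
Proof. intros H.
  assert (H2 := is_derive_mult u u x du du H H (fun n m => Rmult_comm n m)).
  apply is_derive_scal with (k := /2) in H2.
  replace (u x * du) with (/2 * plus (mult du (u x)) (mult (u x) du)).
  2: { unfold plus, mult; simpl. field. }
  eapply is_derive_ext; [|exact H2].
  intros t. simpl. unfold mult; simpl. field.
Qed.

Lemma is_derive_shift (P : R -> R) t d dp : is_derive P (t - d) dp -> is_derive (fun t => P (t - d)) t dp.
Proof. intros H.
  assert (H1 : is_derive (fun t => t - d) t 1) by (auto_derive; auto; ring).
  pose proof (is_derive_comp P (fun t => t - d) t dp 1 H H1) as H2.
  replace dp with (scal 1 dp) by (unfold scal; simpl; unfold mult; simpl; ring). exact H2.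
Qed.

Lemma D_eq C d f z : H6 C d f z -> forall t, d < t ->
  RInt (fun s => f (z s)) (t - d) t = RInt (fun s => f (z s)) 1 t - RInt (fun s => f (z s)) 1 (t - d).
Proof. intros HS t Ht. pose proof (hd _ _ _ _ HS).
  assert (E1 : ex_RInt (fun s => f (z s)) 1 (t - d)) by (apply (g_exRInt _ _ _ _ HS); lra).
  assert (E2 : ex_RInt (fun s => f (z s)) (t - d) t) by (apply (g_exRInt _ _ _ _ HS); lra).
  assert (Hch : RInt (fun u => f (z u)) 1 (t - d) + RInt (fun u => f (z u)) (t - d) t = RInt (fun u => f (z u)) 1 t)
        by exact (RInt_Chasles _ _ _ _ E1 E2).
  lra.
Qed.

Lemma zD C d f z : H6 C d f z -> forall t, d < t ->
  is_derive z t (C * (RInt (fun s => f (z s)) 1 t - RInt (fun s => f (z s)) 1 (t - d))).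
Proof. intros HS t Ht. pose proof (hd _ _ _ _ HS). rewrite <- (D_eq _ _ _ _ HS t Ht). apply (hzd _ _ _ _ HS). lra. Qed.

Lemma DD C d f z : H6 C d f z -> forall t, d < t ->
  is_derive (fun t => C * (RInt (fun s => f (z s)) 1 t - RInt (fun s => f (z s)) 1 (t - d))) t
    (C * (f (z t) - f (z (t - d)))).
Proof. intros HS t Ht. pose proof (hd _ _ _ _ HS).
  apply is_derive_scal. apply is_derive_Rminus.
  - apply prim_deriv with (k := fun s => f (z s)). intros; apply (gc _ _ _ _ HS); auto. lra.
  - apply is_derive_shift. apply prim_deriv with (k := fun s => f (z s)). intros; apply (gc _ _ _ _ HS); auto. lra.
Qed.

Lemma Dpos C d f z : H6 C d f z -> forall t, d < t ->
  0 < C * (RInt (fun s => f (z s)) 1 t - RInt (fun s => f (z s)) 1 (t - d)).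
Proof. intros HS t Ht. rewrite <- (D_eq _ _ _ _ HS t Ht). apply Rmult_lt_0_compat. apply (hC _ _ _ _ HS).
  apply (w_pos _ _ _ _ HS); auto. Qed.

Lemma G_inf f : pos_cont f -> is_lim (fun x => f x / x) p_infty p_infty ->
  exists m, 0 < m /\ forall x, 1 <= x -> m * (x - 1) <= RInt f 1 x.
Proof. intros Hf Hl. destruct (f_low f Hf Hl 1) as [m [Hm Hmf]]; [lra|].
  exists m. split; auto. intros x Hx. apply RInt_lower; auto.
  apply ex_RInt_pos; try lra. intros; apply Hf; auto.
  intros; apply Hmf; lra.
Qed.

Lemma hPhi C d f z : H6 C d f z -> preserves_superexp f ->
  is_lim (fun t =>
    (C * (RInt (fun s => f (z s)) 1 t - RInt (fun s => f (z s)) 1 (t - d)) *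
     (C * (RInt (fun s => f (z s)) 1 t - RInt (fun s => f (z s)) 1 (t - d))) / 2)
    / (C * RInt f 1 (z t))) p_infty 1.
Proof. intros HS Hp. pose proof (hd _ _ _ _ HS) as Hd. pose proof (hC _ _ _ _ HS) as HC.
  set (D := fun t => C * (RInt (fun s => f (z s)) 1 t - RInt (fun s => f (z s)) 1 (t - d))).
  apply (lhop (fun t => D t * D t / 2) (fun t => C * RInt f 1 (z t))
     (fun t => D t * (C * (f (z t) - f (z (t - d))))) (fun t => C * (f (z t) * D t)) d).
  - intros x Hx. apply is_derive_sq. apply (DD _ _ _ _ HS x Hx).
  - intros x Hx. apply is_derive_scal.
    assert (Hg : is_derive (fun t => RInt f 1 t) (z x) (f (z x))).
    { apply prim_deriv with (k := f). intros; apply (hf _ _ _ _ HS); auto. apply (hzpos _ _ _ _ HS); lra. }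
    pose proof (is_derive_comp (fun t => RInt f 1 t) z x _ _ Hg (zD _ _ _ _ HS x Hx)) as H2.
    replace (f (z x) * D x) with (scal (D x) (f (z x))) by (unfold scal; simpl; unfold mult; simpl; unfold D; ring).
    exact H2.
  - destruct (G_inf f (hf _ _ _ _ HS) (hlin _ _ _ _ HS)) as [m [Hm Hmf]].
    apply lim_pinf_iff. intros M.
    destruct (proj1 (lim_pinf_iff z) (z_inf _ _ _ _ HS) (1 + Rabs M / (C * m))) as [N HN].
    exists N. intros x Hx. specialize (HN x Hx).
    assert (0 <= Rabs M / (C * m)) by (apply Rmult_le_pos; [apply Rabs_pos| apply Rlt_le, Rinv_0_lt_compat, Rmult_lt_0_compat; lra]).
    specialize (Hmf (z x) ltac:(lra)).
    assert (Rabs M < C * (m * (z x - 1))).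
    { apply (Rmult_lt_reg_r (/ (C * m))). apply Rinv_0_lt_compat, Rmult_lt_0_compat; lra.
      replace (C * (m * (z x - 1)) * / (C * m)) with (z x - 1) by (field; lra). unfold Rdiv in *; lra. }
    assert (C * (m * (z x - 1)) <= C * RInt f 1 (z x)) by (apply Rmult_le_compat_l; lra).
    pose proof (Rle_abs M). lra.
  - intros eta Heta. destruct (proj1 (lim_fin_iff _ 0) (r_lim _ _ _ _ HS Hp) eta Heta) as [T HT].
    exists (Rmax T d). intros x Hx.
    assert (HxT : T < x) by (pose proof (Rmax_l T d); lra).
    assert (Hxd : d < x) by (pose proof (Rmax_r T d); lra).
    specialize (HT x HxT). rewrite Rminus_0_r in HT.
    assert (Hg1 : 0 < f (z x)) by (apply (gpos _ _ _ _ HS); lra).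
    assert (Hg2 : 0 < f (z (x - d))) by (apply (gpos _ _ _ _ HS); lra).
    assert (HDx : 0 < D x) by (apply (Dpos _ _ _ _ HS); lra).
    rewrite Rabs_right in HT by (apply Rle_ge, Rlt_le, Rdiv_lt_0_compat; lra).
    assert (Hr : f (z (x - d)) < eta * f (z x)).
    { apply Rlt_div_l in HT; lra. }
    assert (HCD : 0 < C * D x) by (apply Rmult_lt_0_compat; lra).
    assert (C * D x * f (z (x - d)) <= C * D x * (eta * f (z x))) by (apply Rmult_le_compat_l; lra).
    assert (0 <= C * D x * f (z (x - d))) by (apply Rmult_le_pos; lra).
    assert (0 <= eta * (C * (f (z x) * D x))) by (apply Rmult_le_pos; [lra| apply Rmult_le_pos; [lra|apply Rmult_le_pos; lra]]).
    split; nra.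
Qed.

Lemma F_split (f : R -> R) : pos_cont f -> ex_RInt_gen f (at_right 0) (at_point 1) ->
  forall x, 0 < x -> RInt_gen f (at_right 0) (at_point x) = RInt_gen f (at_right 0) (at_point 1) + RInt f 1 x.
Proof. intros Hf He x Hx.
  assert (E : ex_RInt f 1 x) by (apply ex_RInt_pos; try lra; intros; apply Hf; auto).
  pose proof (RInt_gen_Chasles (Fa := at_right 0) (Fc := at_point x) f 1 He (proj2 (ex_RInt_gen_at_point f 1 x) E)) as H.
  rewrite (RInt_gen_at_point f 1 x E) in H. rewrite <- H. reflexivity.
Qed.

Lemma F_nonneg (f : R -> R) (a : R) : pos_cont f -> 0 < a -> ex_RInt_gen f (at_right 0) (at_point a) ->
  0 <= RInt_gen f (at_right 0) (at_point a).
Proof. intros Hf Ha He.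
  assert (H := RInt_gen_correct f He).
  pose proof (RInt_gen_norm (Fa := at_right 0) (Fb := at_point a) f f (RInt_gen f (at_right 0) (at_point a)) (RInt_gen f (at_right 0) (at_point a))) as Hn.
  assert (Hp : filter_prod (at_right 0) (at_point a) (fun ab => fst ab <= snd ab /\
      forall x, fst ab <= x <= snd ab -> norm (f x) <= f x)).
  { apply (Filter_prod _ _ _ (fun u => 0 < u < a) (fun v => v = a)).
    - assert (Hp : 0 < a) by lra. exists (mkposreal _ Hp). intros y Hy Hy0.
      change (Rabs (y - 0) < a) in Hy. apply Rabs_def2 in Hy. lra.
    - reflexivity.
    - intros u v Hu Hv. simpl. subst v. split; [lra|]. intros y Hy.
      assert (0 < f y) by (apply Hf; lra). unfold norm; simpl. unfold abs; simpl. rewrite Rabs_right; lra. }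
  specialize (Hn (filter_imp _ _ (fun ab H => proj1 H) Hp) (filter_imp _ _ (fun ab H => proj2 H) Hp) H H).
  unfold norm in Hn; simpl in Hn; unfold abs in Hn; simpl in Hn.
  pose proof (Rle_abs (- RInt_gen f (at_right 0) (at_point a))). rewrite Rabs_Ropp in H0. lra.
Qed.

Lemma F1_pos (f : R -> R) : pos_cont f -> ex_RInt_gen f (at_right 0) (at_point 1) ->
  0 < RInt_gen f (at_right 0) (at_point 1).
Proof. intros Hf He.
  assert (E : ex_RInt f 1 (1/2)) by (apply ex_RInt_pos; try lra; intros; apply Hf; auto).
  assert (He2 : ex_RInt_gen f (at_right 0) (at_point (1/2))).
  { apply (ex_RInt_gen_Chasles (Fa := at_right 0) (Fc := at_point (1/2)) f 1 He).
    exact (proj2 (ex_RInt_gen_at_point f 1 (1/2)) E). }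
  assert (E2 : ex_RInt f (1/2) 1) by (apply ex_RInt_pos; try lra; intros; apply Hf; auto).
  pose proof (RInt_gen_Chasles (Fa := at_right 0) (Fc := at_point 1) f (1/2) He2 (proj2 (ex_RInt_gen_at_point f (1/2) 1) E2)) as H.
  rewrite (RInt_gen_at_point f (1/2) 1 E2) in H.
  pose proof (F_nonneg f (1/2) Hf ltac:(lra) He2).
  assert (0 < RInt f (1/2) 1).
  { apply RInt_gt_0. lra. intros; apply Hf; lra. intros; apply Hf; lra. }
  change (RInt_gen f (at_right 0) (at_point (1/2)) + RInt f (1/2) 1 = RInt_gen f (at_right 0) (at_point 1)) in H.
  lra.
Qed.

Lemma Gz_inf C d f z : H6 C d f z -> is_lim (fun t => RInt f 1 (z t)) p_infty p_infty.
Proof. intros HS.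
  destruct (G_inf f (hf _ _ _ _ HS) (hlin _ _ _ _ HS)) as [m [Hm Hmf]].
  apply lim_pinf_iff. intros M.
  destruct (proj1 (lim_pinf_iff z) (z_inf _ _ _ _ HS) (1 + Rabs M / m)) as [N HN].
  exists N. intros x Hx. specialize (HN x Hx).
  assert (0 <= Rabs M / m) by (apply Rmult_le_pos; [apply Rabs_pos| apply Rlt_le, Rinv_0_lt_compat; lra]).
  specialize (Hmf (z x) ltac:(lra)).
  assert (Rabs M < m * (z x - 1)).
  { apply (Rmult_lt_reg_r (/ m)). apply Rinv_0_lt_compat; lra.
    replace (m * (z x - 1) * / m) with (z x - 1) by (field; lra). unfold Rdiv in *; lra. }
  pose proof (Rle_abs M). lra.
Qed.

Lemma ratio_one (u : R -> R) c : is_lim u p_infty p_infty -> 0 < c ->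
  is_lim (fun t => u t / (c + u t)) p_infty 1.
Proof. intros Hu Hc. apply lim_fin_iff. intros eps Heps.
  destruct (proj1 (lim_pinf_iff u) Hu (c / eps)) as [N HN]. exists N. intros x Hx.
  specialize (HN x Hx).
  assert (0 < c / eps) by (apply Rdiv_lt_0_compat; lra).
  replace (u x / (c + u x) - 1) with (- (c / (c + u x))) by (field; lra).
  rewrite Rabs_Ropp. rewrite Rabs_right by (apply Rle_ge, Rlt_le, Rdiv_lt_0_compat; lra).
  apply Rlt_div_l; [lra|].
  assert (c / eps * eps = c) by (field; lra). nra.
Qed.

Lemma Q_cont f : pos_cont f -> ex_RInt_gen f (at_right 0) (at_point 1) ->
  forall u, 1 <= u -> continuous (fun u => / sqrt (RInt_gen f (at_right 0) (at_point u))) u.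
Proof. intros Hf He u Hu.
  pose proof (F1_pos f Hf He) as HF1.
  set (F1 := RInt_gen f (at_right 0) (at_point 1)) in *.
  apply (continuous_ext_loc _ (fun y => / sqrt (F1 + RInt f 1 y))).
  { apply (filter_imp (fun b => 0 < b)); [|apply loc_gt; lra].
    intros b Hb. rewrite (F_split f Hf He b Hb). reflexivity. }
  assert (HG : 0 <= RInt f 1 u).
  { apply RInt_ge_0; auto. apply ex_RInt_pos; try lra; intros; apply Hf; auto.
    intros; apply Rlt_le, Hf; lra. }
  apply continuous_Rinv_comp.
  - apply continuous_sqrt_comp. apply (continuous_plus (fun _ => F1) (fun y => RInt f 1 y)).
    apply continuous_const.
    apply (ex_derive_continuous (V:=R_NormedModule)). eexists. apply prim_deriv with (k := f). intros; apply Hf; auto. lra.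
  - apply Rgt_not_eq. apply sqrt_lt_R0. lra.
Qed.

Lemma FU_deriv f : pos_cont f -> ex_RInt_gen f (at_right 0) (at_point 1) ->
  forall y, 1 < y -> is_derive (F_U f) y (/ sqrt (RInt_gen f (at_right 0) (at_point y))).
Proof. intros Hf He y Hy. unfold F_U.
  apply (is_derive_RInt (fun u => / sqrt (RInt_gen f (at_right 0) (at_point u)))
    (fun x => RInt (fun u => / sqrt (RInt_gen f (at_right 0) (at_point u))) 1 x) 1 y).
  - apply (filter_imp (fun b => 1 < b)); [|apply loc_gt; lra].
    intros b Hb. apply (RInt_correct (V:=R_CompleteNormedModule)).
    apply (ex_RInt_continuous (V:=R_CompleteNormedModule)). intros u Hu.
    rewrite Rmin_left in Hu by lra. apply Q_cont; auto; lra.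
  - apply Q_cont; auto; lra.
Qed.

Theorem lemma6p5 (C delta : R) (f psi z : R -> R) :
  0 < C -> 0 < delta ->
  pos_cont f ->
  asymptotically_increasing f ->
  is_lim (fun x => f x / x) p_infty p_infty ->
  ex_RInt_gen f (at_right 0) (at_point 1) ->
  continuous_on (fun s => -delta <= s <= 0) psi ->
  (forall t, -delta <= t <= 0 -> 0 < psi t) ->
  preserves_superexp f ->
  (forall t, -delta <= t ->
     filterlim z (within (fun s => -delta <= s) (locally t)) (locally (z t)) /\
     0 < z t) ->
  (forall t, -delta <= t <= 0 -> z t = psi t) ->
  (forall t, 0 < t ->
     is_derive z t (C * RInt (fun s => f (z s)) (t - delta) t)) ->
  filterlim (fun h => (z h - z 0) / h) (at_right 0)
    (locally (C * RInt (fun s => f (z s)) (- delta) 0)) ->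
  is_lim (fun t => F_U f (z t) / t) p_infty (sqrt (2 * C)).
Proof.
  intros HC Hd Hf _ Hlin He _ _ Hp Hz _ Hzd _.
  assert (HS : H6 C delta f z).
  { constructor; auto. intros t Ht. apply (Hz t). lra. }
  set (d := delta) in *.
  set (D := fun t => C * (RInt (fun s => f (z s)) 1 t - RInt (fun s => f (z s)) 1 (t - d))).
  set (Q := fun u => / sqrt (RInt_gen f (at_right 0) (at_point u))).
  set (F1 := RInt_gen f (at_right 0) (at_point 1)).
  pose proof (F1_pos f Hf He) as HF1. fold F1 in HF1.
  destruct (proj1 (lim_pinf_iff z) (z_inf _ _ _ _ HS) 1) as [T1 HT1].
  set (a := Rmax d T1).
  assert (Ha : forall t, a < t -> d < t /\ 1 < z t).
  { intros t Ht. unfold a in Ht. pose proof (Rmax_l d T1); pose proof (Rmax_r d T1). split; [lra| apply HT1; lra]. }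
  apply (cesaro (fun t => F_U f (z t)) (fun t => D t * Q (z t)) a).
  - intros t Ht. destruct (Ha t Ht) as [H1 H2].
    pose proof (is_derive_comp (F_U f) z t _ _ (FU_deriv f Hf He (z t) H2) (zD _ _ _ _ HS t H1)) as H3.
    replace (D t * Q (z t)) with (scal (D t) (Q (z t))) by (unfold scal; simpl; unfold mult; simpl; reflexivity).
    exact H3.
  - set (hr := fun t => (D t * D t / 2) / (C * RInt f 1 (z t))).
    set (gr := fun t => RInt f 1 (z t) / (F1 + RInt f 1 (z t))).
    apply (is_lim_ext_loc (fun t => sqrt (2 * C * hr t * gr t))).
    + exists a. intros t Ht. destruct (Ha t Ht) as [H1 H2].
      assert (HG : 0 < RInt f 1 (z t)).
      { apply RInt_gt_0; auto. intros; apply Hf; lra. intros; apply Hf; lra. }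
      assert (HDt : 0 < D t) by (apply (Dpos _ _ _ _ HS); auto).
      unfold Q. rewrite (F_split f Hf He (z t)) by lra. fold F1.
      unfold hr, gr.
      replace (2 * C * (D t * D t / 2 / (C * RInt f 1 (z t))) * (RInt f 1 (z t) / (F1 + RInt f 1 (z t))))
        with ((D t * D t) / (F1 + RInt f 1 (z t))) by (field; repeat split; lra).
      rewrite sqrt_div by (try apply Rmult_le_pos; lra).
      rewrite sqrt_square by lra. reflexivity.
    + assert (L1 := is_lim_mult _ _ p_infty _ _
         (is_lim_mult _ _ p_infty _ _ (is_lim_const (2 * C) p_infty) (hPhi _ _ _ _ HS Hp) I)
         (ratio_one _ F1 (Gz_inf _ _ _ _ HS) HF1) I).
      simpl in L1. rewrite !Rmult_1_r in L1.
      unfold is_lim. eapply filterlim_comp; [exact L1| apply continuous_sqrt].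
Qed.
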